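(* Let $G$ be a connected graph with $n\ge 13$ vertices and maximum degree $\Delta=\Delta(G)$. Suppose one of the following holds: (1) $n/2\le \Delta\le n-4$ and $e(G)=n+k$ for some $1\le k\le 10$; (2) $\Delta=n-3$ and $e(G)=n+k$ for some $1\le k\le 7$; (3) $\Delta=n-2$ and $e(G)=n+k$ for some $1\le k\le 4$. Then $\frac{q(G)}{R(G)}<\frac{n}{\sqrt{n-1}}$.
   Context: All graphs are finite and simple; $e(G)$ is the number of edges and $\Delta(G)$ the maximum degree. For a vertex $u$, $d(u)$ is its degree. The Randić index is $R(G)=\sum_{\{u,v\}\in E(G)} \frac{1}{\sqrt{d(u)d(v)}}$. The signless Laplacian is $Q=D+A$ ($D$ the diagonal degree matrix, $A$ the adjacency matrix), and $q(G)$ is its largest eigenvalue. *)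

(* Defs.v *)
From HB Require Import structures.
From mathcomp Require Import all_boot all_order all_algebra.
Set Implicit Arguments. Unset Strict Implicit. Unset Printing Implicit Defensive.
Import Order.TTheory GRing.Theory Num.Theory.

Definition simple_graph (n : nat) (g : rel 'I_n) : Prop :=
  symmetric g /\ irreflexive g.

Definition gconnected (n : nat) (g : rel 'I_n) : Prop :=
  forall u v : 'I_n, connect g u v.

Definition deg (n : nat) (g : rel 'I_n) (u : 'I_n) : nat := #|[set v | g u v]|.

Definition maxdeg (n : nat) (g : rel 'I_n) : nat := (\max_(u : 'I_n) deg g u)%N.

Definition edges (n : nat) (g : rel 'I_n) : {set {set 'I_n}} :=
  [set A : {set 'I_n} | [exists u, exists v, g u v && (A == [set u; v])]].

Definition nedges (n : nat) (g : rel 'I_n) : nat := #|edges g|.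

Local Open Scope ring_scope.

(* Randic index: sum over unordered edges = half the sum over ordered adjacent pairs *)
Definition randic (R : rcfType) (n : nat) (g : rel 'I_n) : R :=
  2^-1 * \sum_(u : 'I_n) \sum_(v : 'I_n | g u v)
           (Num.sqrt ((deg g u)%:R * (deg g v)%:R))^-1.

Definition signless_laplacian (R : rcfType) (n : nat) (g : rel 'I_n) : 'M[R]_n :=
  \matrix_(i, j) ((if i == j then (deg g i)%:R else 0) + (g i j)%:R).

Definition is_q (R : rcfType) (n : nat) (g : rel 'I_n) (q : R) : Prop :=
  eigenvalue (signless_laplacian R g) q /\
  forall l : R, eigenvalue (signless_laplacian R g) l -> l <= q.

(* Main.v *)
Require Import Defs.
From HB Require Import structures.
From mathcomp Require Import all_boot all_order all_algebra.
From mathcomp Require Import zify ring lra.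
Import Order.TTheory GRing.Theory Num.Theory.
Section G.
Variables (n : nat) (g : rel 'I_n).
Hypothesis gsym : symmetric g.
Hypothesis girr : irreflexive g.

Lemma deg_sum u : deg g u = \sum_(v | g u v) 1.
Proof. by rewrite /deg sum1_card cardsE. Qed.

Lemma handshake : \sum_u deg g u <= 2 * nedges g.
Proof.
pose P := [set p : 'I_n * 'I_n | g p.1 p.2].
have -> : \sum_u deg g u = #|P|.
  rewrite -sum1_card (partition_big (fun p : 'I_n * 'I_n => p.1) predT) //=.
  apply: eq_bigr => u _; rewrite deg_sum.
  rewrite (reindex (fun v => (u, v))) /=; last first.
    exists (fun p : 'I_n * 'I_n => p.2) => //= [[a b]] /andP[_ /eqP /= ->] //.
  by apply: eq_bigl => v; rewrite inE /= eqxx andbT.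
pose f (p : 'I_n * 'I_n) := ([set p.1; p.2], p.1 < p.2).
have inj : {in P &, injective f}.
  move=> [a b] [c d]; rewrite !inE /= => gab gcd [] Eab Elt.
  have ab : a != b by apply: contraTneq gab => ->; rewrite girr.
  have cd : c != d by apply: contraTneq gcd => ->; rewrite girr.
  have : a \in [set c; d] by rewrite -Eab !inE eqxx.
  have : b \in [set c; d] by rewrite -Eab !inE eqxx orbT.
  rewrite !inE => /orP[] /eqP Hb /orP[] /eqP Ha; subst; rewrite ?eqxx in ab cd => //.
  move: Elt cd; case: (ltngtP d c) => // /val_inj ->; by rewrite eqxx.
rewrite -(card_in_imset inj).
have sub : [set f x | x in P] \subset setX (edges g) [set: bool].
  apply/subsetP => _ /imsetP[[a b] Pab ->]; rewrite !inE /=.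
  rewrite andbT; apply/existsP; exists a; apply/existsP; exists b.
  by move: Pab; rewrite inE /= => ->; rewrite eqxx.
by rewrite (leq_trans (subset_leq_card sub)) // cardsX cardsT card_bool mulnC.
Qed.
End G.

Lemma arith n D k d S s : (13 <= n)%N -> (D + s = n)%N -> (1 <= d)%N -> (d <= D)%N ->
  (S <= d * D)%N -> (S + n <= 2 * (n + k) + 1)%N ->
  (n + 2 * k + 1 <= s * D)%N -> (d * d + S <= n * d)%N.
Proof.
move=> h13 hs h1 hd hS hC hsD.
case: (leqP (d + D) n) => hdD.
  nia.
have : (s * D <= n * d - d * d)%N.
  have : (0 <= (d - s) * (D - d))%N by [].
  nia.
nia.
Qed.

Lemma case1 n D k s : (13 <= n)%N -> (D + s = n)%N -> (n <= 2 * D)%N -> (D <= n - 4)%N ->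
  (k <= 10)%N -> (n + 2 * k + 1 <= s * D)%N.
Proof. move=> *. nia. Qed.

Local Open Scope ring_scope.

Section Q.
Variables (R : rcfType) (n : nat) (g : rel 'I_n).
Hypothesis gsym : symmetric g.
Hypothesis girr : irreflexive g.
Hypothesis degpos : forall u, (0 < deg g u)%N.

Lemma q_bound q : eigenvalue (signless_laplacian R g) q ->
  exists j, (q - (deg g j)%:R) * (deg g j)%:R <= \sum_(i | g j i) (deg g i)%:R.
Proof.
case/eigenvalueP => v Hv /rV0Pn [i0 Hi0].
pose F i := `|v 0 i| / (deg g i)%:R.
pose j := [arg max_(i > i0) F i]%O.
have Fj : forall i, F i <= F j.
  by move=> i; rewrite /j; case: (arg_maxP F (erefl true : (predT i0))) => k _ /(_ i isT).
have dpos : forall i, 0 < (deg g i)%:R :> R by move=> i; rewrite ltr0n.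
have vj : 0 < `|v 0 j|.
  have : 0 < F i0 by rewrite divr_gt0 // normr_gt0.
  move/lt_le_trans/(_ (Fj i0)); rewrite /F => H.
  by move: H; rewrite pmulr_lgt0 // invr_gt0.
exists j.
have Ej : q * v 0 j = (deg g j)%:R * v 0 j + \sum_(i | g j i) v 0 i.
  move/matrixP: Hv => /(_ 0 j); rewrite !mxE => <-.
  rewrite /signless_laplacian.
  under eq_bigr => i _ do rewrite mxE mulrDr.
  rewrite big_split /= (bigD1 j) //= eqxx big1 => [|i /negbTE -> ]; last by rewrite mulr0.
  rewrite addr0 mulrC; congr (_ + _).
  rewrite [RHS]big_mkcond /=; apply: eq_bigr => i _.
  by rewrite gsym; case: (g j i); rewrite ?mulr1 ?mulr0.
have H1 : (q - (deg g j)%:R) * `|v 0 j| <= F j * \sum_(i | g j i) (deg g i)%:R.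
  apply: (le_trans (ler_norm _)).
  rewrite normrM normr_id -normrM mulrBl Ej addrAC subrr add0r.
  apply: (le_trans (ler_norm_sum _ _ _)).
  rewrite mulr_sumr; apply: ler_sum => i _.
  have H : `|v 0 i| <= F j * (deg g i)%:R by rewrite -ler_pdivrMr ?dpos // Fj.
  by rewrite (le_trans H) // mulrC.
move: H1; rewrite /F.
set a := `|v 0 j|. set S := \sum_(i | g j i) (deg g i)%:R. set d := (deg g j)%:R.
have dp : 0 < d := dpos j. move=> H1.
have H2 : (q - d) * a * d <= a / d * S * d by rewrite ler_pM2r.
have E : a / d * S * d = S * a by field; rewrite gt_eqF.
rewrite E mulrAC ler_pM2r // in H2.
Qed.
End Q.

Section Rb.
Variables (R : rcfType) (n : nat) (g : rel 'I_n).
Hypothesis girr : irreflexive g.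
Hypothesis degpos : forall u, (0 < deg g u)%N.

Lemma deg_sumR u : (deg g u)%:R = \sum_v (g u v)%:R :> R.
Proof.
rewrite /deg -sum1_card natr_sum big_mkcond /=; apply: eq_bigr => v _.
by rewrite inE; case: (g u v).
Qed.

Lemma pt_bound (d : nat) (b : bool) : (0 < d)%N ->
  1 + (b : nat)%:R <= Num.sqrt (d%:R : R) + (b : nat)%:R / Num.sqrt (d%:R).
Proof.
move=> d0.
have s1 : 1 <= Num.sqrt (d%:R : R).
  by rewrite -[X in X <= _]sqrtr1 ler_sqrt ?ler0n // ler1n.
have s0 : 0 < Num.sqrt (d%:R : R) by lra.
case: b => /=; last by rewrite mul0r !addr0.
have : 2 - Num.sqrt (d%:R : R) <= 1 / Num.sqrt (d%:R) by rewrite ler_pdivlMr //; nra.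
rewrite mul1r; lra.
Qed.

Lemma randic_lb w : (forall u, (deg g u <= deg g w)%N) ->
  (n.-1)%:R + (deg g w)%:R <= 2 * randic R g * Num.sqrt (deg g w)%:R.
Proof.
move=> wmax.
set D := (deg g w)%:R : R.
have sD : 0 < Num.sqrt D by rewrite sqrtr_gt0 ltr0n.
have sd : forall u, 0 < Num.sqrt (deg g u)%:R :> R by move=> u; rewrite sqrtr_gt0 ltr0n.
rewrite /randic mulrA mulfV ?pnatr_eq0 // mul1r mulr_suml (bigD1 w) //=.
have Hw : (\sum_(v | g w v) (Num.sqrt (D * (deg g v)%:R))^-1) * Num.sqrt D
   = \sum_(v | g w v) (Num.sqrt (deg g v)%:R)^-1.
  rewrite mulr_suml; apply: eq_bigr => v _.
  rewrite sqrtrM ?ler0n // invfM mulrAC mulVf ?mul1r // gt_eqF //.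
have Hu : forall u, Num.sqrt (deg g u)%:R <=
   (\sum_(v | g u v) (Num.sqrt ((deg g u)%:R * (deg g v)%:R))^-1) * Num.sqrt D.
  move=> u.
  have : \sum_(v | g u v) (Num.sqrt ((deg g u)%:R * D))^-1 <=
         \sum_(v | g u v) (Num.sqrt ((deg g u)%:R * (deg g v)%:R))^-1 :> R.
    apply: ler_sum => v _.
    rewrite lef_pV2 ?posrE ?sqrtr_gt0 ?mulr_gt0 ?ltr0n //.
    by rewrite ler_sqrt ?mulr_ge0 ?ler0n // ler_pM2l ?ltr0n // ler_nat.
  rewrite sumr_const -(ler_pM2r sD) => /(le_trans _); apply.
  have cd : #|g u| = deg g u by rewrite /deg cardsE.
  have E : forall (s t : R) (k : nat), 0 < s -> 0 < t -> s ^+ 2 = k%:R -> (s * t)^-1 *+ k * t = s.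
    by move=> s t k s0 t0 hk; rewrite -mulr_natl -hk; field; rewrite !gt_eqF.
  by rewrite cd sqrtrM ?ler0n // E ?sqr_sqrtr ?ler0n.
rewrite Hw.
apply: (@le_trans _ _ (\sum_(v | g w v) (Num.sqrt (deg g v)%:R)^-1 + \sum_(u | u != w) Num.sqrt (deg g u)%:R)); last first.
  by rewrite lerD2l; apply: ler_sum => u _; apply: Hu.
have E1 : \sum_(v | g w v) (Num.sqrt (deg g v)%:R)^-1 = \sum_(v | v != w) (g w v : nat)%:R / Num.sqrt (deg g v)%:R :> R.
  rewrite big_mkcond [RHS]big_mkcond (bigD1 w) //= girr add0r [RHS](bigD1 w) //= eqxx add0r.
  apply: eq_bigr => v _; case: eqP => [->|_]; first by rewrite girr.
  by case: (g w v) => /=; rewrite ?div1r ?mul0r.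
have E2 : D = \sum_(v | v != w) (g w v : nat)%:R.
  by rewrite /D deg_sumR (bigD1 w) //= girr add0r.
have E3 : (n.-1)%:R = \sum_(v | v != w) 1 :> R.
  by rewrite sumr_const cardC1 card_ord.
rewrite E1 E2 E3 -!big_split /=; apply: ler_sum => u _.
by rewrite [X in _ <= X]addrC; apply: pt_bound.
Qed.
End Rb.

Section Nat.
Variables (n : nat) (g : rel 'I_n).
Hypothesis girr : irreflexive g.
Hypothesis degpos : forall u, (0 < deg g u)%N.

Lemma S_bound j : (\sum_(i | g j i) deg g i + n.-1 <= \sum_i deg g i)%N.
Proof.
have A : (n = deg g j + (1 + \sum_(i | ~~ g j i && (i != j)) 1))%N.
  by rewrite -{1}(card_ord n) -sum1_card (bigID (fun i => g j i)) /= -deg_sum (bigD1 j) ?girr.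
have B : (\sum_(i | ~~ g j i && (i != j)) 1 <= \sum_(i | ~~ g j i && (i != j)) deg g i)%N.
  by apply: leq_sum => i _; apply: degpos.
have E : (\sum_(i | ~~ g j i) deg g i = deg g j + \sum_(i | ~~ g j i && (i != j)) deg g i)%N.
  by rewrite (bigD1 j) ?girr.
rewrite [X in (_ <= X)%N](bigID (fun i => g j i)) /= E.
lia.
Qed.
End Nat.

Theorem lemma3p5 (R : rcfType) (n : nat) (g : rel 'I_n) (q : R) :
  simple_graph g -> gconnected g -> (13 <= n)%N ->
  [\/ (n <= 2 * maxdeg g /\ maxdeg g <= n - 4
         /\ exists k, (1 <= k <= 10)%N /\ nedges g = (n + k)%N),
      (maxdeg g = n - 3 /\ exists k, (1 <= k <= 7)%N /\ nedges g = (n + k)%N)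
    | (maxdeg g = n - 2 /\ exists k, (1 <= k <= 4)%N /\ nedges g = (n + k)%N)]%N ->
  is_q g q ->
  q / randic R g < n%:R / Num.sqrt (n.-1)%:R.
Proof.
move=> [gsym girr] gconn n13 hcases [qeig _].
have i0 : 'I_n by exists 0%N; lia.
have degpos : forall u, (0 < deg g u)%N.
  move=> u.
  have v1 : ((if val u == 0%N then 1 else 0) < n)%N by case: (val u == 0%N); lia.
  have := gconn u (Ordinal v1) => /connectP [[|x p]] /=.
    move=> _ /(congr1 val) /=; case: eqP => /= [->|] //; lia.
  case/andP => gux _ _; apply/card_gt0P; exists x; by rewrite inE.
pose w := [arg max_(i > i0) deg g i].
have wmax : forall u, (deg g u <= deg g w)%N.
  by move=> u; rewrite /w; case: arg_maxnP => // k _; apply.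
have Dw : maxdeg g = deg g w.
  apply/eqP; rewrite eqn_leq; apply/andP; split; last exact: leq_bigmax.
  by apply/bigmax_leqP => u _; apply: wmax.
rewrite Dw in hcases.
set D := deg g w in hcases wmax Dw.
have [k [hsD hDn hm]] : exists k, [/\ (n + 2 * k + 1 <= (n - D) * D)%N, (D <= n - 2)%N
                             & nedges g = (n + k)%N].
  case: hcases => [[h1 [h2 [k [hk ->]]]]|[h1 [k [hk ->]]]|[h1 [k [hk ->]]]]; exists k.
  - by split => //; [apply: (@case1 n D k) => //; lia | lia].
  - split => //; rewrite h1; nia.
  - split => //; rewrite h1; nia.
have hs := @handshake _ _ girr.
have qn : q <= n%:R.
  have [j hj] := @q_bound R n g gsym degpos q qeig.
  set d := deg g j in hj.
  have dp : (0 < d)%N := degpos j.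
  have S1 := @S_bound n g girr degpos j.
  have S2 : (\sum_(i | g j i) deg g i <= d * D)%N.
    rewrite mulnC -[d]/(deg g j) deg_sum big_distrr /= muln1.
    by apply: leq_sum => i _; apply: wmax.
  have key : (d * d + \sum_(i | g j i) deg g i <= n * d)%N.
    apply: (@arith n D k d _ (n - D)) => //; try lia.
    by apply: wmax.
  move: hj; rewrite -natr_sum => hj.
  have : (q - d%:R) * d%:R <= (n * d - d * d)%:R :> R.
    apply: (le_trans hj); rewrite ler_nat; lia.
  rewrite natrB; last by nia.
  rewrite !natrM => h.
  have dR : 0 < d%:R :> R by rewrite ltr0n.
  nra.
have RL := @randic_lb R n g girr degpos w wmax.
change (deg g w) with D in RL.
set Rg := randic R g in RL *.
set x := Num.sqrt (n.-1)%:R : R.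
set y := Num.sqrt D%:R : R.
have y0 : 0 < y by rewrite sqrtr_gt0 ltr0n; apply: degpos.
have xy : y < x by rewrite ltr_sqrt ?ltr0n ?ltr_nat; lia.
have x2 : x ^+ 2 = (n.-1)%:R by rewrite sqr_sqrtr ?ler0n.
have y2 : y ^+ 2 = D%:R by rewrite sqr_sqrtr ?ler0n.
have hxy : 0 < (x - y) ^+ 2 by rewrite exprn_gt0 // subr_gt0.
have xR : x < Rg.
  have e : (x - y) ^+ 2 = x ^+ 2 - 2 * (x * y) + y ^+ 2 by ring.
  change (Num.sqrt D%:R) with y in RL.
  rewrite -x2 -y2 -mulrA in RL.
  have h : x * y < Rg * y  by rewrite e in hxy; lra.
  by rewrite -(ltr_pM2r y0).
have x0 : 0 < x by lra.
have R0 : 0 < Rg by lra.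
have h1 : q / Rg <= n%:R / Rg by rewrite ler_pM2r ?invr_gt0.
have h2 : n%:R / Rg < n%:R / x.
  by rewrite ltr_pM2l ?ltr0n ?ltf_pV2 ?posrE //; lia.
lra.
Qed.
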